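(* Let $\alpha,\beta$ be parameters and $q$ an indeterminate, and let $E_{n,k}(\alpha,\beta,q)$ ($n\ge k\ge 0$) be the numbers defined in the context. For all integers $n\geq k\geq 0$, \[ E_{n,k}(\alpha,\beta,q)=\sum_{\sigma\in\mathfrak{S}_{n+1,k}}[\alpha]^{\mathrm{lrmin}(\sigma)-1}[\beta]^{\mathrm{rlmin}(\sigma)-1}q^{\widetilde{\mathrm{maj}}(\sigma)}, \] where $\mathfrak{S}_{n+1,k}$ is the set of permutations of $\{1,\dots,n+1\}$ with exactly $k$ descents and, for $\sigma\in\mathfrak{S}_{n+1}$, \[ \widetilde{\mathrm{maj}}(\sigma)=(1+\mathrm{des}(\sigma)-\mathrm{lrmin}(\sigma))(\alpha-1)+(n+1-\mathrm{rlmin}(\sigma))(\beta-1)+\mathrm{maj}(\sigma). \]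
   Context: For a real $x$, $[x]=\frac{1-q^x}{1-q}$. The numbers $E_{n,k}(\alpha,\beta,q)$ (in the paper, $E_{n,k}(\alpha,\beta,q)=A(k,n-k\,|\,\alpha,\beta)_q$, Gaudin's $q$-analogue of the Carlitz–Scoville numbers obtained by normalizing Nadeau–Tewari remixed Eulerian numbers) are determined by $E_{0,0}=1$, $E_{n,k}=0$ if $k\notin\{0,\dots,n\}$, and for $n\ge1$ \[ E_{n,k}(\alpha,\beta,q)=q^{\beta+k-1}[n-k+\alpha]E_{n-1,k-1}(\alpha,\beta,q)+[k+\beta]E_{n-1,k}(\alpha,\beta,q). \] For $\sigma=\sigma_1\cdots\sigma_m\in\mathfrak{S}_m$: $\mathrm{des}(\sigma)=|\{i\in[m-1]:\sigma_i>\sigma_{i+1}\}|$; $\mathrm{maj}(\sigma)=\sum_{\sigma_i>\sigma_{i+1}}i$; $\mathrm{lrmin}(\sigma)=|\{i:\sigma_i<\sigma_j\ \forall j<i\}|$ (left-to-right minima); $\mathrm{rlmin}(\sigma)=|\{i:\sigma_i<\sigma_j\ \forall j>i\}|$ (right-to-left minima). *)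

(* Defs.v *)
From HB Require Import structures.
From mathcomp Require Import all_boot all_order all_algebra all_fingroup.
From mathcomp Require Import all_classical all_reals.
From mathcomp Require Import exp.
Set Implicit Arguments. Unset Strict Implicit. Unset Printing Implicit Defensive.
Import Order.TTheory GRing.Theory Num.Theory.
Local Open Scope ring_scope.

Section Defs.
Variable R : realType.

Definition qint (q x : R) : R := (1 - q `^ x) / (1 - q).

Fixpoint Enk (q a b : R) (n k : nat) : R :=
  match n with
  | 0%N => if k == 0%N then 1 else 0
  | n'.+1 =>
      (match k with
       | 0%N => 0
       | k'.+1 => q `^ (b + k%:R - 1) * qint q (n%:R - k%:R + a) * Enk q a b n' k'
       end) + qint q (k%:R + b) * Enk q a b n' k
  end.
End Defs.

(* Statistics on words w = w_1 ... w_m (stored 0-indexed in a seq nat). *)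
Definition wdes (w : seq nat) : nat :=
  count (fun i => nth 0%N w i.+1 < nth 0%N w i)%N (iota 0 (size w).-1).
Definition wmaj (w : seq nat) : nat :=
  (\sum_(i <- iota 0 (size w).-1 | (nth 0%N w i.+1 < nth 0%N w i)%N) i.+1)%N.
Definition wlrmin (w : seq nat) : nat :=
  count (fun i => all (fun j => nth 0%N w i < nth 0%N w j)%N (iota 0 i))
        (iota 0 (size w)).
Definition wrlmin (w : seq nat) : nat :=
  count (fun i => all (fun j => nth 0%N w i < nth 0%N w j)%N
                      (iota i.+1 (size w - i.+1)))
        (iota 0 (size w)).

(* one-line word of a permutation of {0,...,m-1} (values shifted by one
   from {1,...,m}, which does not affect any statistic) *)
Definition pword (m : nat) (s : 'S_m) : seq nat := [seq val (s i) | i <- enum 'I_m].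
Definition des m (s : 'S_m) := wdes (pword s).
Definition maj m (s : 'S_m) := wmaj (pword s).
Definition lrmin m (s : 'S_m) := wlrmin (pword s).
Definition rlmin m (s : 'S_m) := wrlmin (pword s).

Definition majt (R : realType) (a b : R) (n : nat) (s : 'S_n.+1) : R :=
  (1 + (des s)%:R - (lrmin s)%:R) * (a - 1)
  + ((n.+1)%:R - (rlmin s)%:R) * (b - 1) + (maj s)%:R.

(* Main.v *)
Require Import Defs.
From HB Require Import structures.
From mathcomp Require Import all_boot all_order all_algebra all_fingroup.
From mathcomp Require Import all_classical all_reals.
From mathcomp Require Import exp.
From mathcomp Require Import zify ring lra.
Set Implicit Arguments. Unset Strict Implicit. Unset Printing Implicit Defensive.

Fixpoint dl (w : seq nat) : seq bool :=
  match w with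
  | x :: ((y :: _) as t) => (y < x) :: dl t
  | _ => [::]
  end.

Fixpoint majb (D : seq bool) : nat :=
  if D is b :: D' then b + count id D' + majb D' else 0.

Lemma iota1 n : iota 1 n = map succn (iota 0 n).
Proof. by rewrite -(iotaDl 1 0). Qed.

Lemma dl_cons2 x y t : dl [:: x, y & t] = (y < x) :: dl (y :: t).
Proof. by []. Qed.

Lemma dl_nth w : dl w = [seq (nth 0 w i.+1 < nth 0 w i) | i <- iota 0 (size w).-1].
Proof.
elim: w => [|x [|y t] IH] //.
rewrite dl_cons2 IH /= iota1 -map_comp; congr (_ :: _).
Qed.

Lemma size_dl w : size (dl w) = (size w).-1.
Proof. by rewrite dl_nth size_map size_iota. Qed.

Lemma wdes_dl w : wdes w = count id (dl w).
Proof. by rewrite dl_nth count_map. Qed.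

Lemma count_nth D : count id D = count (nth false D) (iota 0 (size D)).
Proof. by rewrite -{1}(mkseq_nth false D) /mkseq count_map. Qed.

Lemma majb_sum D : majb D = \sum_(i <- iota 0 (size D) | nth false D i) i.+1.
Proof.
elim: D => [|b D IH] /=; first by rewrite big_nil.
rewrite big_cons /= iota1 big_map IH.
have -> : \sum_(j <- iota 0 (size D) | nth false D j) j.+2 =
   \sum_(j <- iota 0 (size D) | nth false D j) j.+1 + \sum_(j <- iota 0 (size D) | nth false D j) 1.
  by rewrite -big_split /=; apply: eq_bigr => i _; rewrite addn1.
rewrite sum1_count -count_nth.
by case: b => /=; lia.
Qed.

Lemma wmaj_dl w : wmaj w = majb (dl w).
Proof.
rewrite majb_sum size_dl /wmaj big_seq_cond [RHS]big_seq_cond.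
apply: eq_bigl => i; rewrite mem_iota /= add0n.
case Hi: (i < (size w).-1) => //=.
by rewrite dl_nth (nth_map 0) ?size_iota // nth_iota.
Qed.

Fixpoint lrf (m : nat) (w : seq nat) : nat :=
  if w is x :: t then (if x < m then (lrf x t).+1 else lrf m t) else 0.

Lemma lr_unfold (P : nat -> bool) x t :
  count (fun i => P (nth 0 (x::t) i) && all (fun j => nth 0 (x::t) i < nth 0 (x::t) j) (iota 0 i))
    (iota 0 (size (x::t))) =
  P x + count (fun i => P (nth 0 t i) && ((nth 0 t i < x) && all (fun j => nth 0 t i < nth 0 t j) (iota 0 i)))
    (iota 0 (size t)).
Proof.
rewrite /= andbT iota1 count_map; congr (_ + _); apply: eq_count => i /=.
by rewrite iota1 all_map.
Qed.

Lemma lrf_def m w :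
  count (fun i => (nth 0 w i < m) && all (fun j => nth 0 w i < nth 0 w j) (iota 0 i)) (iota 0 (size w))
  = lrf m w.
Proof.
elim: w m => [|x t IH] m //.
rewrite (lr_unfold (fun y => y < m)) /=.
case: ltnP => Hxm; rewrite -IH ?add1n ?add0n; try congr S;
  apply: eq_count => i /=; rewrite andbA; congr (_ && _);
  apply/idP/idP; try case/andP; try lia; move=> H; apply/andP; lia.
Qed.

Lemma wlrmin_cons x t : wlrmin (x :: t) = (lrf x t).+1.
Proof.
have := lr_unfold (fun _ => true) x t; rewrite /wlrmin => ->.
by rewrite -(lrf_def x t).
Qed.

Lemma all_nth (P : pred nat) t : all P t = all (fun i => P (nth 0 t i)) (iota 0 (size t)).
Proof. by rewrite -{1}(mkseq_nth 0 t) /mkseq all_map. Qed.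

Lemma wrlmin_cons x t : wrlmin (x :: t) = all (fun y => x < y) t + wrlmin t.
Proof.
rewrite /wrlmin /= subn1 /= iota1 count_map; congr (_ + _).
  by rewrite all_map [in RHS]all_nth.
apply: eq_count => i /=; rewrite subSS.
by rewrite (_ : i.+2 = 1 + i.+1)// iotaDl all_map.
Qed.

Definition ins (M p : nat) (w : seq nat) := take p w ++ M :: drop p w.

Lemma ins0 M w : ins M 0 w = M :: w.
Proof. by rewrite /ins take0 drop0. Qed.

Lemma insS M p x t : ins M p.+1 (x :: t) = x :: ins M p t.
Proof. by []. Qed.

Lemma lrf_ins M m p w : m <= M -> all (fun x => x < M) w -> lrf m (ins M p w) = lrf m w.
Proof.
elim: w m p => [|x t IH] m p Hm.
  by move=> _; rewrite /ins /= ltnNge Hm.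
move=> /= /andP [Hx Ht]; case: p => [|p].
  by rewrite ins0 /= [M < m]ltnNge Hm.
rewrite insS /=; case: ltnP => _; rewrite IH //; lia.
Qed.

Lemma wlrmin_ins M p w : w != [::] -> all (fun x => x < M) w ->
  wlrmin (ins M p w) = (p == 0) + wlrmin w.
Proof.
case: w => [|x t] // _ /= /andP [Hx Ht].
case: p => [|p].
  by rewrite ins0 !wlrmin_cons /= Hx.
by rewrite insS !wlrmin_cons lrf_ins //; lia.
Qed.

Lemma all_ins (P : pred nat) M p w : all P (ins M p w) = P M && all P w.
Proof.
by rewrite /ins all_cat /= -{3}(cat_take_drop p w) all_cat andbCA.
Qed.

Lemma wrlmin_nil : wrlmin [::] = 0.
Proof. by []. Qed.

Lemma wrlmin_ins M p w : all (fun x => x < M) w ->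
  wrlmin (ins M p w) = (size w <= p) + wrlmin w.
Proof.
elim: w p => [|x t IH] p.
  by move=> _; rewrite /ins /= wrlmin_cons.
move=> /= /andP [Hx Ht]; case: p => [|p].
  rewrite ins0 wrlmin_cons /= ltnNge (ltnW Hx) /=; by [].
rewrite insS wrlmin_cons all_ins Hx IH // wrlmin_cons /=; lia.
Qed.

Definition rep (D : seq bool) j := take j D ++ false :: true :: drop j.+1 D.

Lemma dl_ins0 M w : w != [::] -> all (fun x => x < M) w -> dl (ins M 0 w) = true :: dl w.
Proof. by case: w => [|x t] // _ /andP [Hx _]; rewrite ins0 dl_cons2 Hx. Qed.

Lemma dl_insL M p w : w != [::] -> all (fun x => x < M) w -> size w <= p ->
  dl (ins M p w) = rcons (dl w) false.
Proof.
move=> Hw Hall Hp; rewrite /ins take_oversize // drop_oversize //.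
elim: w Hw Hall {Hp} => [|x [|y t] IH] // _ /andP [Hx Ht].
  by rewrite cat1s dl_cons2 /= ltnNge (ltnW Hx).
by rewrite !cat_cons dl_cons2 -cat_cons IH // dl_cons2.
Qed.

Lemma dl_insM M p w : all (fun x => x < M) w -> 0 < p < size w ->
  dl (ins M p w) = rep (dl w) p.-1.
Proof.
elim: w p => [|x t IH] [|p] // /andP [Hx Ht] Hp.
have {}Ht : all (fun x => x < M) t := Ht.
rewrite insS; case: p Hp => [|p] Hp.
  case: t IH Ht Hp => [|y t] IH; first by move=> _ Hp; move: Hp; rewrite /=; lia.
  move=> /andP [Hy _] _.
  by rewrite ins0 !dl_cons2 /rep /= drop0 [M < x]ltnNge (ltnW Hx) Hy.
case: t IH Ht Hp => [|y t] IH Ht Hp; first by move: Hp; rewrite /=; lia.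
by rewrite insS dl_cons2 -insS IH.
Qed.

Lemma count_rep D j : j < size D -> count id (rep D j) = count id D + ~~ nth false D j.
Proof.
move=> Hj; rewrite /rep; have -> : count id D = count id (take j D ++ drop j D) by rewrite cat_take_drop.
rewrite (drop_nth false Hj) !count_cat /=; case: (nth false D j) => /=; lia.
Qed.

Lemma majb_rep D j : j < size D -> majb (rep D j) = majb D +
  (if nth false D j then (count id (drop j.+1 D)).+1 else j.+2 + count id (drop j.+1 D)).
Proof.
elim: D j => [|b D IH] [|j] //= Hj.
  rewrite /rep /= drop0; case: b => /=; lia.
have := IH j Hj; have := count_rep Hj; rewrite /rep /= => Hc Hm.
rewrite Hc Hm; case: (nth false D j) => /=; lia.
Qed.

Lemma count_rcons_f D : count id (rcons D false) = count id D.
Proof. rewrite -cats1 count_cat /=; lia. Qed.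

Lemma majb_rcons_f D : majb (rcons D false) = majb D.
Proof. by elim: D => [|b D IH] //; rewrite rcons_cons /= IH count_rcons_f. Qed.

Fixpoint Pm (m : nat) : seq (seq nat) :=
  if m is m'.+1 then [seq ins m' p w | w <- Pm m', p <- iota 0 m] else [:: [::]].

Lemma ins_perm M p w : perm_eq (ins M p w) (M :: w).
Proof. by rewrite /ins -cat1s perm_catCA cat_take_drop. Qed.

Lemma ins_inv M p w : p <= size w -> take p (ins M p w) ++ drop p.+1 (ins M p w) = w.
Proof.
move=> Hp; have Hs : size (take p w) = p by rewrite size_takel.
rewrite /ins take_size_cat // drop_cat Hs (ltnNge p.+1 p) leqnSn /= subSnn /=.
by rewrite drop0 cat_take_drop.
Qed.

Lemma ins_rec M p t : p < size t -> nth 0 t p = M ->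
  ins M p (take p t ++ drop p.+1 t) = t.
Proof.
move=> Hp Hn; have Hs : size (take p t) = p by rewrite size_takel // ltnW.
rewrite /ins take_size_cat // drop_size_cat // -Hn -drop_nth //.
by rewrite cat_take_drop.
Qed.

Lemma iotaSr m : perm_eq (iota 0 m.+1) (m :: iota 0 m).
Proof. by rewrite -addn1 iotaD cats1 perm_rcons. Qed.

Lemma Pm_mem m t : (t \in Pm m) = perm_eq t (iota 0 m).
Proof.
elim: m t => [|m IH] t.
  rewrite /= inE; apply/eqP/perm_nilP => //.
apply/allpairsP/idP.
  move=> [[w p]] [/= Hw Hp ->].
  have {}Hw : w \in Pm m := Hw.
  apply: (perm_trans (ins_perm _ _ _)).
  rewrite perm_sym (permPl (iotaSr m)) perm_cons perm_sym -IH //.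
move=> Ht.
have Hm : m \in t by rewrite (perm_mem Ht) mem_iota add0n ltnSn.
have Hsz : size t = m.+1 by rewrite (perm_size Ht) size_iota.
set p := index m t.
have Hp : p < size t by rewrite index_mem.
have Hrec := ins_rec Hp (nth_index 0 Hm).
exists (take p t ++ drop p.+1 t, p) => /=; split => //.
- change (take p t ++ drop p.+1 t \in Pm m); rewrite IH -(perm_cons m).
  apply: (perm_trans _ (iotaSr m)); apply: (perm_trans _ Ht).
  by have := ins_perm m p (take p t ++ drop p.+1 t); rewrite Hrec perm_sym.
- by rewrite -/(iota 0 m.+1) mem_iota add0n -Hsz.
Qed.

Lemma index_ins M p w : M \notin w -> p <= size w -> index M (ins M p w) = p.
Proof.
move=> HM Hp; rewrite /ins index_cat size_takel //.
have -> : (M \in take p w) = false.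
  by apply/negP => /mem_take; apply/negP.
by rewrite /= eqxx addn0.
Qed.

Lemma ins_injP M p1 w1 p2 w2 : M \notin w1 -> M \notin w2 -> p1 <= size w1 -> p2 <= size w2 ->
  ins M p1 w1 = ins M p2 w2 -> (w1, p1) = (w2, p2).
Proof.
move=> H1 H2 Hp1 Hp2 Heq.
have Ep : p1 = p2 by rewrite -(index_ins H1 Hp1) -(index_ins H2 Hp2) Heq.
subst p2; congr (_, _).
by rewrite -(ins_inv M Hp1) -(ins_inv M Hp2) Heq.
Qed.

Lemma Pm_size m w : w \in Pm m -> size w = m.
Proof. by rewrite Pm_mem => /perm_size ->; rewrite size_iota. Qed.

Lemma Pm_notin m w : w \in Pm m -> m \notin w.
Proof. by rewrite Pm_mem => /perm_mem ->; rewrite mem_iota ltnn andbF. Qed.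

Lemma Pm_uniq m : uniq (Pm m).
Proof.
elim: m => [|m IH] //.
change (uniq [seq ins m p w | w <- Pm m, p <- iota 0 m.+1]).
apply: allpairs_uniq => //; first exact: iota_uniq.
move=> [w1 p1] [w2 p2] H1 H2 /= Heq.
have /allpairsP [[w1' p1'] [/= Hw1 Hp1 [E1 E2]]] := H1.
have /allpairsP [[w2' p2'] [/= Hw2 Hp2 [E3 E4]]] := H2.
subst.
move: Hp1 Hp2; rewrite -/(iota 0 m.+1) !mem_iota /= => Hp1 Hp2.
apply: (ins_injP (Pm_notin Hw1) (Pm_notin Hw2)) => //; rewrite ?(Pm_size Hw1) ?(Pm_size Hw2); lia.
Qed.

Lemma pword_inj m : injective (@pword m).
Proof.
move=> s t H; apply/permP => i; apply/val_inj.
have := congr1 (fun w => nth 0 w i) H.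
by rewrite /pword !(nth_map i) -?enumT ?size_enum_ord // nth_ord_enum.
Qed.

Lemma pword_perm m (s : 'S_m) : perm_eq (pword s) (iota 0 m).
Proof.
apply: uniq_perm; [|exact: iota_uniq|].
  rewrite map_inj_uniq ?enum_uniq // => i j /val_inj; exact: perm_inj.
move=> x; rewrite mem_iota add0n /=; apply/mapP/idP.
  by case=> i _ ->; exact: ltn_ord.
move=> Hx; exists ((s^-1)%g (Ordinal Hx)); first by rewrite mem_enum.
by rewrite permKV.
Qed.

Lemma perm_pword m w : perm_eq w (iota 0 m) -> exists s : 'S_m, pword s = w.
Proof.
move=> Hw.
have Hsz : size w = m by rewrite (perm_size Hw) size_iota.
have Hu : uniq w by rewrite (perm_uniq Hw) iota_uniq.
have Hlt : forall i : 'I_m, nth 0 w i < m.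
  move=> i; have : nth 0 w i \in w by rewrite mem_nth // Hsz.
  by rewrite (perm_mem Hw) mem_iota.
pose f (i : 'I_m) : 'I_m := insubd i (nth 0 w i).
have Hf : forall i, val (f i) = nth 0 w i by move=> i; rewrite val_insubd Hlt.
have finj : injective f.
  move=> i j /(congr1 val); rewrite !Hf => /eqP.
  rewrite nth_uniq ?Hsz // => /eqP; exact: val_inj.
exists (perm finj); rewrite /pword.
rewrite (eq_map (g := fun i : 'I_m => nth 0 w i)); last by move=> i; rewrite permE Hf.
have -> : [seq nth 0 w i | i : 'I_m <- enum 'I_m] = map (nth 0 w) (map val (enum 'I_m)).
  by rewrite -map_comp.
by rewrite val_enum_ord -Hsz -/(mkseq (nth 0 w) (size w)) mkseq_nth.
Qed.

Lemma sum_Pm (R : nmodType) (F : seq nat -> R) m :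
  \big[+%R/0%R]_(s : 'S_m) F (pword s) = \big[+%R/0%R]_(w <- Pm m) F w.
Proof.
have -> : \big[+%R/0%R]_(s : 'S_m) F (pword s) =
   \big[+%R/0%R]_(w <- map (@pword m) (index_enum _)) F w by rewrite big_map.
apply: perm_big; apply: uniq_perm.
- by rewrite map_inj_uniq ?index_enum_uniq //; exact: pword_inj.
- exact: Pm_uniq.
move=> w; rewrite Pm_mem; apply/mapP/idP.
  by case=> s _ ->; exact: pword_perm.
by move=> /perm_pword [s <-]; exists s; rewrite ?mem_index_enum.
Qed.

Lemma wrlmin_pos w : w != [::] -> (0 < wrlmin w)%N.
Proof.
elim: w => [|x [|y t] IH] // _.
rewrite wrlmin_cons; have := IH isT; lia.
Qed.

Lemma wlrmin_pos w : w != [::] -> (0 < wlrmin w)%N.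
Proof. by case: w => [|x t] // _; rewrite wlrmin_cons. Qed.

Section RealPart.
Import GRing.Theory.
Local Open Scope ring_scope.
Variable R : comNzRingType.
Variables (q A B : R).

Definition wt (w : seq nat) : R :=
  A ^+ (wlrmin w).-1 * B ^+ (wrlmin w).-1 * q ^+ wmaj w.

Lemma sumf D : \sum_(j <- iota 0 (size D))
    (if nth false D j then q ^+ (count id (drop j.+1 D)).+1 else 0)
  = \sum_(1 <= i < (count id D).+1) q ^+ i.
Proof.
elim: D => [|c D IH]; first by rewrite big_nil big_geq.
rewrite /= big_cons iota1 big_map /= drop0 IH.
case: c => /=; last by rewrite add0r add0n.
by rewrite add1n [RHS]big_nat_recr //= addrC.
Qed.

Lemma sumg D o : \sum_(j <- iota 0 (size D))
    (if nth false D j then 0 else q ^+ (o + j + 1 + count id (drop j.+1 D)))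
  = \sum_(o + count id D + 1 <= i < o + size D + 1) q ^+ i.
Proof.
elim: D o => [|c D IH] o; first by rewrite big_nil big_geq // addn0.
rewrite /= big_cons iota1 big_map /= drop0.
rewrite (eq_bigr (fun j => if nth false D j then 0 else
   q ^+ (o.+1 + j + 1 + count id (drop j.+1 D)))); last first.
  by move=> j _; congr (if _ then _ else _ ^+ _); lia.
rewrite IH; case: c => /=.
  by rewrite add0r; congr (\sum_(_ <= _ < _) _); lia.
rewrite add0n addn0 (big_ltn (m := o + count id D + 1)); last first.
  have := count_size id D; lia.
congr (_ + _); first by congr (_ ^+ _); lia.
congr (\sum_(_ <= _ < _) _); lia.
Qed.



Lemma wt_mid M w j : all (fun x => x < M)%N w -> (j.+1 < size w)%N ->
  wdes (ins M j.+1 w) = (wdes w + ~~ nth false (dl w) j)%N /\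
  wt (ins M j.+1 w) = wt w * q ^+ (if nth false (dl w) j
     then (count id (drop j.+1 (dl w))).+1 else j.+2 + count id (drop j.+1 (dl w))).
Proof.
move=> Hall Hj.
have Hj' : (j < size (dl w))%N by rewrite size_dl; lia.
have Hw : w != [::] by case: w {Hj'} Hall Hj.
have Hdl : dl (ins M j.+1 w) = rep (dl w) j by rewrite (dl_insM Hall) //; lia.
split; first by rewrite !wdes_dl Hdl count_rep.
rewrite /wt !wmaj_dl Hdl majb_rep // wlrmin_ins // wrlmin_ins //.
have -> : (size w <= j.+1)%N = false by apply/negbTE; rewrite -ltnNge.
by rewrite /= !add0n exprD mulrA.
Qed.

Lemma wt_0 M w : all (fun x => x < M)%N w -> w != [::] ->
  wdes (ins M 0 w) = (wdes w).+1 /\ wt (ins M 0 w) = A * wt w * q ^+ (wdes w).+1.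
Proof.
move=> Hall Hw; have Hd := dl_ins0 Hw Hall.
split; first by rewrite !wdes_dl Hd.
rewrite /wt wmaj_dl Hd wlrmin_ins // wrlmin_ins //.
have -> : (size w <= 0)%N = false by case: w Hw {Hall Hd}.
rewrite /= add0n add1n -wdes_dl -wmaj_dl.
rewrite -{1}(prednK (wlrmin_pos Hw)) exprS /=.
by rewrite add0n exprD; ring.
Qed.

Lemma wt_L M w p : all (fun x => x < M)%N w -> w != [::] -> (size w <= p)%N -> p != 0%N ->
  wdes (ins M p w) = wdes w /\ wt (ins M p w) = B * wt w.
Proof.
move=> Hall Hw Hp Hp0; have Hd := dl_insL Hw Hall Hp.
split; first by rewrite !wdes_dl Hd count_rcons_f.
rewrite /wt wmaj_dl Hd majb_rcons_f wlrmin_ins // wrlmin_ins // Hp (negbTE Hp0).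
rewrite /= add0n -wmaj_dl.
rewrite -{1}(prednK (wrlmin_pos Hw)) exprS; ring.
Qed.

Lemma slot_sum M w k : w != [::] -> all (fun x => x < M)%N w ->
  \sum_(p <- iota 0 (size w).+1) (if wdes (ins M p w) == k then wt (ins M p w) else 0) =
  wt w * ((wdes w == k)%:R * (B + \sum_(1 <= j < (wdes w).+1) q ^+ j)
        + ((wdes w).+1 == k)%:R * (q ^+ (wdes w).+1 * A
                                   + \sum_((wdes w).+2 <= j < (size w).+1) q ^+ j)).
Proof.
move=> Hw Hall.
case Ew : (size w) => [|L]; first by move: Ew => /eqP; rewrite size_eq0 (negbTE Hw).
have -> : iota 0 L.+2 = 0%N :: (map succn (iota 0 L) ++ [:: L.+1]).
  change (0%N :: iota 1 L.+1 = 0%N :: (map succn (iota 0 L) ++ [:: L.+1])).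
  by rewrite -iota1; have := iotaD 1 L 1; rewrite addn1 add1n => ->.
rewrite big_cons big_cat big_seq1 /=.
have [Hd0 Hw0] := wt_0 Hall Hw.
have [HdL HwL] := wt_L Hall Hw (p := L.+1) (eq_leq Ew) isT.
rewrite Hd0 Hw0 HdL HwL.
set d := wdes w.
have Hsz : size (dl w) = L by rewrite size_dl Ew.
rewrite big_map big_seq.
rewrite (eq_bigr (fun j => (d == k)%:R * wt w *
      (if nth false (dl w) j then q ^+ (count id (drop j.+1 (dl w))).+1 else 0)
    + (d.+1 == k)%:R * wt w *
      (if nth false (dl w) j then 0 else q ^+ (1 + j + 1 + count id (drop j.+1 (dl w)))))); last first.
  move=> j; rewrite mem_iota add0n => /andP [_ Hj].
  have Hj2 : (j.+1 < size w)%N by rewrite Ew.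
  have [Hdj Hwj] := wt_mid Hall Hj2.
  rewrite Hdj Hwj; case: (nth false (dl w) j) => /=.
    by rewrite addn0 mulr0 addr0; case: (d == k) => /=; rewrite ?mulr1 ?mul1r ?mul0r.
  rewrite addn1 mulr0 add0r (_ : (1 + j + 1)%N = j.+2); last by lia.
  by case: (d.+1 == k) => /=; rewrite ?mulr1 ?mul1r ?mul0r.
rewrite -big_seq big_split /= -!mulr_sumr -Hsz sumf (sumg (dl w) 1) -wdes_dl -/d Hsz.
rewrite (_ : (1 + d + 1)%N = d.+2); last by lia.
rewrite (_ : (1 + L + 1)%N = L.+2); last by lia.
case: (d == k); case: (d.+1 == k); rewrite /= ?mul0r ?mul1r ?mulr0 ?mulr1 ?add0r ?addr0; ring.
Qed.



Definition Fs m k := \sum_(w <- Pm m) (if wdes w == k then wt w else 0).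

Lemma Pm_all m w : w \in Pm m -> all (fun x => x < m)%N w.
Proof.
rewrite Pm_mem => /perm_mem Hw; apply/allP => x; rewrite Hw mem_iota; lia.
Qed.

Lemma Pm_ne m w : (0 < m)%N -> w \in Pm m -> w != [::].
Proof. by move=> Hm /Pm_size Hs; apply/eqP => E; move: Hs; rewrite E /=; lia. Qed.

Lemma F_rec m k : (0 < m)%N -> Fs m.+1 k =
  (if k is k'.+1 then (q ^+ k * A + \sum_(k.+1 <= j < m.+1) q ^+ j) * Fs m k' else 0)
  + (B + \sum_(1 <= j < k.+1) q ^+ j) * Fs m k.
Proof.
move=> Hm; rewrite /Fs.
change (Pm m.+1) with [seq ins m p w | w <- Pm m, p <- iota 0 m.+1].
rewrite big_allpairs_dep /= big_seq.
rewrite (eq_bigr (fun w => (B + \sum_(1 <= j < k.+1) q ^+ j) * (if wdes w == k then wt w else 0)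
   + (if k is k'.+1 then (q ^+ k * A + \sum_(k.+1 <= j < m.+1) q ^+ j) *
        (if wdes w == k' then wt w else 0) else 0))); last first.
  move=> w Hw.
  have := @slot_sum m w k (Pm_ne Hm Hw) (Pm_all Hw); rewrite (Pm_size Hw) => ->.
  case: k => [|k'].
    case: eqP => [->|_] /=; ring.
  rewrite eqSS; case: eqP => [E1|N1]; case: eqP => [E2|N2]; try (exfalso; lia).
  - rewrite E1 /=; ring.
  - rewrite E2 /=; ring.
  - rewrite /=; ring.
rewrite -big_seq big_split /= -mulr_sumr addrC; congr (_ + _).
case: k => [|k']; first by rewrite big1.
by rewrite -mulr_sumr.
Qed.

End RealPart.

Lemma wdes_le w : (wdes w <= (size w).-1)%N.
Proof. by rewrite wdes_dl -size_dl count_size. Qed.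

Section Final.
Import Order.TTheory GRing.Theory Num.Theory.
Local Open Scope ring_scope.
Variable R : realType.
Variables q a b : R.
Hypothesis hq0 : 0 < q.
Hypothesis hq1 : q != 1.

Let qn0 : q != 0. Proof. by rewrite gt_eqF. Qed.
Let q1n0 : 1 - q != 0. Proof. by rewrite subr_eq0 eq_sym. Qed.

Lemma QD x y : q `^ (x + y) = q `^ x * q `^ y.
Proof. by rewrite powRD // qn0 implybT. Qed.
Lemma QB x y : q `^ (x - y) = q `^ x / q `^ y.
Proof. by rewrite QD powRN. Qed.
Lemma Qn n : q `^ n%:R = q ^+ n.
Proof. by rewrite powR_mulrn // ltW. Qed.
Lemma QnM n x : q `^ (n%:R * x) = (q `^ x) ^+ n.
Proof. by rewrite mulrC powRrM powR_mulrn // powR_ge0. Qed.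
Lemma Qne0 x : q `^ x != 0.
Proof. by rewrite gt_eqF // powR_gt0. Qed.

Definition X := q `^ (a - 1).
Definition Y := q `^ (b - 1).
Definition AA := qint q a * q `^ (1 - a).
Definition BB := qint q b * q `^ (1 - b).

Lemma Xn0 : X != 0. Proof. exact: Qne0. Qed.
Lemma Yn0 : Y != 0. Proof. exact: Qne0. Qed.

Lemma L1 k n : q `^ (k%:R * (a - 1) + n%:R * (b - 1)) = X ^+ k * Y ^+ n.
Proof. by rewrite QD !QnM. Qed.
Lemma Qa : q `^ a = X * q.
Proof. by rewrite -{1}(subrK 1 a) QD powRr1 // ltW. Qed.
Lemma Qb : q `^ b = Y * q.
Proof. by rewrite -{1}(subrK 1 b) QD powRr1 // ltW. Qed.
Lemma AAE : AA = (1 - X * q) / (1 - q) / X.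
Proof. by rewrite /AA /qint Qa -[1 - a]opprB powRN. Qed.
Lemma BBE : BB = (1 - Y * q) / (1 - q) / Y.
Proof. by rewrite /BB /qint Qb -[1 - b]opprB powRN. Qed.

Lemma L2 k : q `^ (k%:R + b) = q ^+ k * (Y * q).
Proof. by rewrite QD Qn Qb. Qed.
Lemma L3 k : q `^ (b + k%:R - 1) = Y * q ^+ k.
Proof. by rewrite /Y (_ : b + k%:R - 1 = (b - 1) + k%:R) ?QD ?Qn //; ring. Qed.
Lemma L4 n k : q `^ (n%:R - k%:R + a) = q ^+ n / q ^+ k * (X * q).
Proof. by rewrite QD QB !Qn Qa. Qed.

Lemma geom u v : (u <= v)%N -> \sum_(u <= j < v) q ^+ j = (q ^+ u - q ^+ v) / (1 - q).
Proof.
move=> Huv; apply: (canRL (mulfK q1n0)).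
elim: v Huv => [|v IH] Huv.
  by move: Huv; rewrite leqn0 => /eqP ->; rewrite big_geq // subrr mul0r.
case: (ltngtP u v.+1) Huv => // [Hlt|->] _; last by rewrite big_geq // subrr mul0r.
rewrite big_nat_recr //= mulrDl IH // exprS; ring.
Qed.

Lemma Enk_vanish n k : (n < k)%N -> Enk q a b n k = 0.
Proof.
elim: n k => [|n IH] k Hk /=.
  by case: k Hk => [|k] Hk.
case: k Hk => [|k] // Hk.
rewrite (IH k) ?(IH k.+1) ?mulr0 ?add0r //; lia.
Qed.

Lemma F_vanish m k : (0 < m)%N -> (m <= k)%N -> Fs q AA BB m k = 0.
Proof.
move=> Hm Hk; rewrite /Fs big_seq big1 // => w Hw.
have := wdes_le w; rewrite (Pm_size Hw) => Hd.
case: eqP => // E; exfalso; lia.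
Qed.

Lemma Enk_F n k : Enk q a b n k = q `^ (k%:R * (a - 1) + n%:R * (b - 1)) * Fs q AA BB n.+1 k.
Proof.
elim: n k => [|n IH] k.
  rewrite /Fs /= big_cons big_nil /wt wlrmin_cons wrlmin_cons wmaj_dl /= addr0.
  case: k => [|k] /=; last by rewrite mulr0.
  by rewrite !mul0r addr0 powRr0 !mulr1.
case: (leqP k n.+1) => Hk; last by rewrite Enk_vanish // F_vanish ?mulr0 //; lia.
rewrite [Enk _ _ _ n.+1 k]/= F_rec //.
case: k Hk => [|k] Hk.
  rewrite IH; move: (Fs q AA BB n.+1 0) => F0.
  rewrite !mul0r !add0r !QnM -/Y big_geq // addr0 /qint Qb BBE exprS.
  by field; rewrite q1n0 Yn0.
rewrite !IH; move: (Fs q AA BB n.+1 k) (Fs q AA BB n.+1 k.+1) => F0 F1.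
rewrite !L1 L3 /qint L4 L2 !geom // AAE BBE.
rewrite !exprS.
by field; rewrite q1n0 Xn0 Yn0 qn0 expf_neq0.
Qed.

Lemma AAq : AA = qint q a / X.
Proof. by rewrite /AA -[1 - a]opprB powRN. Qed.
Lemma BBq : BB = qint q b / Y.
Proof. by rewrite /BB -[1 - b]opprB powRN. Qed.

Lemma size_pword m (s : 'S_m) : size (pword s) = m.
Proof. by rewrite /pword size_map size_enum_ord. Qed.

Lemma main_sum n k :
  \sum_(s : 'S_n.+1 | des s == k)
     qint q a ^+ (lrmin s).-1 * qint q b ^+ (rlmin s).-1 * q `^ (majt a b s)
  = q `^ (k%:R * (a - 1) + n%:R * (b - 1)) * Fs q AA BB n.+1 k.
Proof.
rewrite big_mkcond /=.
rewrite (eq_bigr (fun s => (fun w => if wdes w == k then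
   q `^ (k%:R * (a - 1) + n%:R * (b - 1)) * wt q AA BB w else 0) (pword s))); last first.
  move=> s _; rewrite /des /lrmin /rlmin /majt /maj /des /lrmin /rlmin /=.
  have Hne : pword s != [::] by rewrite -size_eq0 size_pword.
  move: (pword s) Hne => w Hne.
  case: eqP => // Hd.
  rewrite /wt -(prednK (wlrmin_pos Hne)) -(prednK (wrlmin_pos Hne)) /=.
  move: (wlrmin w).-1 (wrlmin w).-1 (wmaj w) => l r mj.
  rewrite Hd -!natr1.
  rewrite (_ : (1 + k%:R - (l%:R + 1)) * (a - 1) + (n%:R + 1 - (r%:R + 1)) * (b - 1) + mj%:R
     = (k%:R * (a - 1) + n%:R * (b - 1)) - (l%:R * (a - 1) + r%:R * (b - 1)) + mj%:R); last by ring.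
  rewrite QD QB !L1 Qn AAq BBq !exprMn !exprVn.
  by field; rewrite !expf_neq0 ?Xn0 ?Yn0.
rewrite (sum_Pm (fun w => if wdes w == k then
   q `^ (k%:R * (a - 1) + n%:R * (b - 1)) * wt q AA BB w else 0)).
rewrite /Fs mulr_sumr; apply: eq_bigr => w _.
by case: ifP; rewrite ?mulr0.
Qed.

End Final.

Unset Implicit Arguments.
Import Order.TTheory GRing.Theory Num.Theory.
Local Open Scope ring_scope.

Theorem theorem1p1 (R : realType) (q a b : R) (hq0 : 0 < q) (hq1 : q != 1)
  (n k : nat) (hkn : (k <= n)%N) :
  Enk q a b n k =
  \sum_(s : 'S_n.+1 | des s == k)
     qint q a ^+ (lrmin s).-1 * qint q b ^+ (rlmin s).-1 * q `^ (majt a b s).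
Proof.
by rewrite main_sum // Enk_F.
Qed.
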